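(* Let $\alpha \ge 1$ and let $\mathcal{F}$ be a $k$-uniform hypergraph on $[n]$. Suppose that the transposition $(ij)$ of two vertices $i \neq j$ is an automorphism of $\mathcal{F}$. Let $\vec{w} \in \mathbb{R}^n$ with $\|\vec{w}\|_\alpha = 1$ and $w_t \ge 0$ for all $1 \le t \le n$. Define $\vec{w}'$ by $w'_i = w'_j = ((w_i^\alpha + w_j^\alpha)/2)^{1/\alpha}$ and $w'_t = w_t$ for $t \in [n]\setminus\{i,j\}$. Then $\tau_{\mathcal{F}}(\vec{w}',\dots,\vec{w}') \ge \tau_{\mathcal{F}}(\vec{w},\dots,\vec{w})$.
   Context: For a $k$-uniform hypergraph $\mathcal{F}$ on $[n]$ and $x\in\mathbb{R}^n$, $\tau_{\mathcal{F}}(x,\dots,x) = k!\sum_{\{i_1,\dots,i_k\}\in E(\mathcal{F})}x_{i_1}\cdots x_{i_k}$. $\|x\|_\alpha = (\sum_i|x_i|^\alpha)^{1/\alpha}$. *)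

(* Defs.v *)
From HB Require Import structures.
From mathcomp Require Import all_boot all_order all_algebra all_fingroup.
From mathcomp Require Import all_classical all_reals all_analysis.
Set Implicit Arguments. Unset Strict Implicit. Unset Printing Implicit Defensive.
Import Order.TTheory GRing.Theory Num.Theory.
Local Open Scope ring_scope.

Definition k_uniform (n k : nat) (E : {set {set 'I_n}}) : Prop :=
  forall e, e \in E -> #|e| = k.

Definition hyp_automorphism (n : nat) (E : {set {set 'I_n}}) (s : {perm 'I_n}) : Prop :=
  forall e : {set 'I_n}, (s @: e \in E) = (e \in E).

Definition tau (R : realType) (n k : nat) (E : {set {set 'I_n}}) (x : 'I_n -> R) : R :=
  (k`!)%:R * \sum_(e in E) \prod_(v in e) x v.

Definition lpnorm (R : realType) (n : nat) (alpha : R) (x : 'I_n -> R) : R :=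
  (\sum_(t < n) `|x t| `^ alpha) `^ alpha^-1.

Definition wsym (R : realType) (n : nat) (alpha : R) (i j : 'I_n) (w : 'I_n -> R) : 'I_n -> R :=
  fun t => if (t == i) || (t == j) then
             ((w i `^ alpha + w j `^ alpha) / 2) `^ alpha^-1
           else w t.

(* Main.v *)
Require Import Defs.
From HB Require Import structures.
From mathcomp Require Import all_boot all_order all_algebra all_fingroup.
From mathcomp Require Import all_classical all_reals all_analysis.
From mathcomp Require Import ring lra.
Import Order.TTheory GRing.Theory Num.Theory.
Local Open Scope ring_scope.

Lemma pmean_ge (R : realType) (p a b : R) : 1 <= p -> 0 <= a -> 0 <= b ->
  (a + b) / 2 <= ((a `^ p + b `^ p) / 2) `^ p^-1.
Proof.
move=> p1 a0 b0.
have p0 : 0 < p by rewrite (lt_le_trans _ p1).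
have h : ((a + b) / 2) `^ p <= (a `^ p + b `^ p) / 2.
  have -> : (a + b) / 2 = 2^-1 * a + (1 - 2^-1) * b.
    by field.
  have -> : (a `^ p + b `^ p) / 2 = 2^-1 * a `^ p + (1 - 2^-1) * b `^ p.
    by field.
  have i : 0 <= (2^-1 : R) by rewrite invr_ge0.
  have i0 : (2^-1 : R) <= 1 by rewrite invf_le1 ?ler1n.
  have := (convex_powR p1 (Itv01 i i0) (x:=a) (y:=b)).
  rewrite convRE /=.
  apply; rewrite ?inE/= ?in_itv/= ?andbT //.
have -> : (a + b) / 2 = (((a + b) / 2) `^ p) `^ p^-1.
  by rewrite -powRrM mulfV ?gt_eqF // powRr1 // divr_ge0 ?addr_ge0.
apply: ge0_ler_powR => //; rewrite ?invr_ge0 ?ltW ?nnegrE ?powR_ge0 //.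
by rewrite divr_ge0 ?addr_ge0 ?powR_ge0.
Qed.

Lemma prod_pick (R : realType) (n : nat) (P : pred 'I_n) (a : 'I_n) (x : 'I_n -> R) :
  \prod_(v | P v && (v == a)) x v = if P a then x a else 1.
Proof.
case: (boolP (P a)) => Pa.
  rewrite (big_pred1 a) // => v /=; case: (eqVneq v a) => [->|]; rewrite ?andbT ?andbF //.
rewrite big_pred0 // => v /=; case: (eqVneq v a) => [->|]; rewrite ?andbT ?andbF //.
exact: negbTE.
Qed.

Lemma prod_split (R : realType) (n : nat) (i j : 'I_n) (x : 'I_n -> R) (e : {set 'I_n}) :
  i != j ->
  \prod_(v in e) x v = (if i \in e then x i else 1) * (if j \in e then x j else 1) *
     \prod_(v in e | (v != i) && (v != j)) x v.
Proof.
move=> ij.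
rewrite (bigID (pred1 i)) /= prod_pick.
rewrite (bigID (pred1 j)) /= prod_pick eq_sym ij andbT mulrA.
congr (_ * _); apply: eq_bigl => v; by rewrite andbA.
Qed.

Lemma sum_perm (R : realType) (n : nat) (E : {set {set 'I_n}}) (s : {perm 'I_n})
  (w : 'I_n -> R) :
  (forall e : {set 'I_n}, (s @: e \in E) = (e \in E)) ->
  \sum_(e in E) \prod_(v in e) w (s v) = \sum_(e in E) \prod_(v in e) w v.
Proof.
move=> hE.
have hinj : injective (fun e : {set 'I_n} => s @: e).
  by apply: imset_inj; apply: perm_inj.
rewrite [RHS](reindex_inj hinj) /=.
apply: eq_big => e; first by rewrite hE.
move=> _; rewrite big_imset //= => x y _ _; exact: perm_inj.
Qed.

Theorem lemma11 (R : realType) (alpha : R) (n k : nat)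
  (E : {set {set 'I_n}}) (i j : 'I_n) (w : 'I_n -> R) :
  1 <= alpha ->
  k_uniform k E ->
  i != j ->
  hyp_automorphism E (tperm i j) ->
  lpnorm alpha w = 1 ->
  (forall t, 0 <= w t) ->
  tau k E (wsym alpha i j w) >= tau k E w.
Proof.
move=> a1 _ ij haut _ w0.
set c := ((w i `^ alpha + w j `^ alpha) / 2) `^ alpha^-1.
have c0 : 0 <= c by rewrite powR_ge0.
have hc : (w i + w j) / 2 <= c by apply: pmean_ge.
have wa := w0 i; have wb := w0 j.
have hs0 : 0 <= (w i + w j) / 2 by rewrite divr_ge0 ?addr_ge0.
have hss : (w i + w j) / 2 * ((w i + w j) / 2) <= c * c by apply: ler_pM.
have hab : w i * w j <= (w i + w j) / 2 * ((w i + w j) / 2).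
  rewrite -subr_ge0.
  have -> : (w i + w j) / 2 * ((w i + w j) / 2) - w i * w j = (w i - w j) ^+ 2 / 4 by field.
  by rewrite divr_ge0 ?sqr_ge0.
have habc : w i * w j <= c * c by apply: le_trans hab hss.
have hS := @sum_perm R n E (tperm i j) w haut.
have key : \sum_(e in E) \prod_(v in e) w v + \sum_(e in E) \prod_(v in e) w (tperm i j v)
   <= 2 * \sum_(e in E) \prod_(v in e) wsym alpha i j w v.
  rewrite -big_split /= mulr_sumr; apply: ler_sum => e _.
  rewrite !(@prod_split R n i j _ _ ij).
  set Q := \prod_(v in e | (v != i) && (v != j)) w v.
  have Q0 : 0 <= Q by apply: prodr_ge0 => v _.
  have -> : \prod_(v in e | (v != i) && (v != j)) w (tperm i j v) = Q.
    by apply: eq_bigr => v /andP[_ /andP[vi vj]]; rewrite tpermD // eq_sym.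
  have -> : \prod_(v in e | (v != i) && (v != j)) wsym alpha i j w v = Q.
    by apply: eq_bigr => v /andP[_ /andP[vi vj]]; rewrite /wsym (negbTE vi) (negbTE vj).
  rewrite tpermL tpermR /wsym !eqxx ?orbT /= -/c.
  have h1 : 0 <= (c * c - w i * w j) * Q by rewrite mulr_ge0 ?subr_ge0.
  have h2 : 0 <= (2 * c - (w i + w j)) * Q by rewrite mulr_ge0 ?subr_ge0 //; lra.
  by case: (i \in e); case: (j \in e); nra.
rewrite hS in key.
rewrite /tau; apply: ler_wpM2l => //; lra.
Qed.
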